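(* Let $\delta\in\{1,-1\}$. Let $\alpha,\beta,\gamma\in\mathbb{Z}[i]$ satisfy $\alpha^2+(1+\delta i)\beta^2+\gamma^2=0$, $\alpha\beta\gamma\neq0$, $\gcd(\alpha,\beta)\in U$. Then, after multiplying $\alpha,\beta,\gamma$ by suitable units and possibly interchanging the first and third coordinates, one obtains $(X,Y,Z)$ with $X^2+(1+\delta i)Y^2=Z^2$, $X,Z\in O^I$, $Y=(1+i)^{2+a_1}p_2^{a_2}\cdots p_m^{a_m}$ (integers $a_j\ge0$, $p_j$ distinct Gaussian primes in $O^I$), $\gcd(X,Y)\in U$, $XYZ\ne0$. Conversely, if $(X,Y,Z)$ satisfies $X^2+(1+\delta i)Y^2=Z^2$, $\gcd(X,Y)\in U$, $XYZ\neq 0$, then $(X,Y,iZ)$ is a solution of $X^2+(1+\delta i)Y^2+Z^2=0$ with the same conditions.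
   Context: $\mathbb{Z}[i]$ is the ring of Gaussian integers, $U=\{1,-1,i,-i\}$ its unit group; $R(\alpha),I(\alpha)$ are real and imaginary parts. $\gcd(x,y)\in U$ means no common non-unit divisor. $O=\{\alpha: R(\alpha)+I(\alpha)\equiv1\pmod 2\}$, $O^I=\{\alpha\in O: R(\alpha)\equiv 1\pmod 4\}$. *)

(* Defs.v *)
(* Gaussian integers Z[i] modelled as pairs (re, im) of ints. *)
From mathcomp Require Import all_boot all_order all_algebra.
Set Implicit Arguments. Unset Strict Implicit. Unset Printing Implicit Defensive.
Import Order.TTheory GRing.Theory Num.Theory.
Local Open Scope ring_scope.

Definition gi : Type := (int * int)%type.

Definition gRe (x : gi) : int := x.1.
Definition gIm (x : gi) : int := x.2.
Definition g0 : gi := (0, 0).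
Definition g1 : gi := (1, 0).
Definition gI : gi := (0, 1).
Definition gofint (n : int) : gi := (n, 0).
Definition gadd (x y : gi) : gi := (x.1 + y.1, x.2 + y.2).
Definition gmul (x y : gi) : gi := (x.1 * y.1 - x.2 * y.2, x.1 * y.2 + x.2 * y.1).
Fixpoint gexp (x : gi) (n : nat) : gi :=
  match n with O => g1 | S k => gmul x (gexp x k) end.
Definition gsq (x : gi) : gi := gmul x x.

Definition gdvd (d x : gi) : Prop := exists k : gi, x = gmul d k.
Definition gunit (u : gi) : Prop := u = (1, 0) \/ u = (-1, 0) \/ u = (0, 1) \/ u = (0, -1).
Definition gcd_unit (x y : gi) : Prop := forall d : gi, gdvd d x -> gdvd d y -> gunit d.
Definition gprime (p : gi) : Prop :=
  p <> g0 /\ ~ gunit p /\ forall a b : gi, p = gmul a b -> gunit a \/ gunit b.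
Definition inO (x : gi) : Prop := ((x.1 + x.2) %% 2)%Z = 1.
Definition inOI (x : gi) : Prop := inO x /\ (x.1 %% 4)%Z = 1.

Definition gprod_pows (s : seq (gi * nat)) : gi :=
  foldr (fun pa acc => gmul (gexp pa.1 pa.2) acc) g1 s.

(* Main.v *)
Require Import Defs.
From mathcomp Require Import all_boot all_order all_algebra.
From mathcomp Require Import zify ring lra.
From Stdlib Require Import Classical.
Import Order.TTheory GRing.Theory Num.Theory.
Local Open Scope ring_scope.

Definition gnrm (x : gi) : int := x.1 * x.1 + x.2 * x.2.
Definition gconj (x : gi) : gi := (x.1, - x.2).
Definition gneg (x : gi) : gi := (- x.1, - x.2).
Definition w1 : gi := (1, 1).

Ltac gd x := let a := fresh "a" in let b := fresh "b" in case: x => a b.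
Ltac gring := rewrite /gsq /gadd /gmul /gneg /gconj /g0 /g1 /gI /gnrm /w1 /=; congr (_, _); ring.

Lemma gmulC x y : gmul x y = gmul y x. Proof. gd x; gd y; gring. Qed.
Lemma gmulA x y z : gmul x (gmul y z) = gmul (gmul x y) z.
Proof. gd x; gd y; gd z; gring. Qed.
Lemma gmul1 x : gmul g1 x = x. Proof. gd x; gring. Qed.
Lemma gmul1r x : gmul x g1 = x. Proof. gd x; gring. Qed.
Lemma gmul0 x : gmul x g0 = g0. Proof. gd x; gring. Qed.
Lemma gmulDr x y z : gmul x (gadd y z) = gadd (gmul x y) (gmul x z).
Proof. gd x; gd y; gd z; gring. Qed.

Lemma gnrmM x y : gnrm (gmul x y) = gnrm x * gnrm y.
Proof. gd x; gd y; rewrite /gnrm /gmul /=; ring. Qed.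
Lemma gnrm_ge0 x : 0 <= gnrm x. Proof. gd x; rewrite /gnrm /=; nia. Qed.
Lemma gnrm0 x : gnrm x = 0 -> x = g0.
Proof. gd x; rewrite /gnrm /g0 /= => h. have ha : a = 0 by nia. have hb : b = 0 by nia. by rewrite ha hb. Qed.
Lemma gnrm0' x : x <> g0 -> 0 < gnrm x.
Proof. move=> h; have := gnrm_ge0 x; have : gnrm x <> 0 by move/gnrm0. lia. Qed.
Lemma gmul_conj x : gmul x (gconj x) = (gnrm x, 0).
Proof. gd x; gring. Qed.

Lemma gunit_norm u : gunit u <-> gnrm u = 1.
Proof.
split.
  by case=> [->|[->|[->|->]]]; rewrite /gnrm /=; lia.
gd u; rewrite /gnrm /= => h.
have : a = 0 \/ a = 1 \/ a = -1 by nia.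
have : b = 0 \/ b = 1 \/ b = -1 by nia.
case=> [?|[?|?]]; case=> [?|[?|?]]; subst; rewrite /gunit; try (exfalso; lia); by [left|right;left|right;right;left|right;right;right].
Qed.

Lemma gunitM u v : gunit u -> gunit v -> gunit (gmul u v).
Proof. rewrite !gunit_norm gnrmM => -> ->; lia. Qed.
Lemma gunit_inv u : gunit u -> exists v, gunit v /\ gmul u v = g1.
Proof.
move=> hu; exists (gconj u); split.
  by move: hu; rewrite !gunit_norm; gd u; rewrite /gnrm /=; lia.
by rewrite gmul_conj; move: hu; rewrite gunit_norm => ->.
Qed.
Lemma gunit_ne0 u : gunit u -> u <> g0.
Proof. by rewrite gunit_norm => h e; move: h; rewrite e /gnrm /=. Qed.

Lemma gdvd_refl x : gdvd x x. Proof. by exists g1; rewrite gmul1r. Qed.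
Lemma gdvd_trans a b c : gdvd a b -> gdvd b c -> gdvd a c.
Proof. by move=> [k ->] [l ->]; exists (gmul k l); rewrite gmulA. Qed.
Lemma gdvd_mull a b c : gdvd a b -> gdvd a (gmul c b).
Proof. by move=> [k ->]; exists (gmul c k); rewrite gmulA (gmulC c) -gmulA. Qed.
Lemma gdvd_mulr a b c : gdvd a b -> gdvd a (gmul b c).
Proof. by rewrite gmulC; apply: gdvd_mull. Qed.
Lemma gdvd_add a b c : gdvd a b -> gdvd a c -> gdvd a (gadd b c).
Proof. by move=> [k ->] [l ->]; exists (gadd k l); rewrite gmulDr. Qed.
Lemma gdvd1 d : gdvd d g1 -> gunit d.
Proof.
move=> [k hk]; rewrite gunit_norm.
have : gnrm g1 = gnrm d * gnrm k by rewrite hk gnrmM.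
have -> : gnrm g1 = 1 by rewrite /gnrm /g1 /=.
move=> e; have := gnrm_ge0 d; have := gnrm_ge0 k.
have : gnrm d <> 0 by move=> z; rewrite z in e; lia.
have : gnrm k <> 0 by move=> z; rewrite z in e; lia.
nia.
Qed.
Lemma gdvd_unitl d x u : gunit u -> gdvd d (gmul u x) -> gdvd d x.
Proof.
move=> hu h; have [v [_ hv]] := gunit_inv _ hu.
have -> : x = gmul v (gmul u x) by rewrite gmulA (gmulC v) hv gmul1.
exact: gdvd_mull.
Qed.
Lemma gcd_unit_units x y u v : gunit u -> gunit v -> gcd_unit x y -> gcd_unit (gmul u x) (gmul v y).
Proof. move=> hu hv h d h1 h2; apply: h; [exact: (gdvd_unitl _ _ _ hu h1)|exact: (gdvd_unitl _ _ _ hv h2)]. Qed.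
Lemma gmul_unit_ne0 u x : gunit u -> x <> g0 -> gmul u x <> g0.
Proof.
move=> hu hx e; apply: hx; have [v [_ hv]] := gunit_inv _ hu.
by rewrite -(gmul1 x) -hv (gmulC u) -gmulA e gmul0.
Qed.

Lemma divbound (A n : int) : 0 < n -> let q := ((2 * A + n) %/ (2 * n))%Z in
  - n <= 2 * (A - q * n) <= n.
Proof. move=> hn /=. lia. Qed.

Lemma gconj_norm y : gnrm (gconj y) = gnrm y.
Proof. gd y; rewrite /gnrm /gconj /=; ring. Qed.

Lemma rconj x y q : gmul (gadd x (gneg (gmul q y))) (gconj y) =
  ((gmul x (gconj y)).1 - q.1 * gnrm y, (gmul x (gconj y)).2 - q.2 * gnrm y).
Proof. gd x; gd y; gd q; gring. Qed.

Lemma gdiv x y : y <> g0 -> exists q, gnrm (gadd x (gneg (gmul q y))) < gnrm y.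
Proof.
move=> hy; have hn := gnrm0' _ hy.
set n := gnrm y.
set A := (gmul x (gconj y)).1; set B := (gmul x (gconj y)).2.
pose q := (((2 * A + n) %/ (2 * n))%Z, ((2 * B + n) %/ (2 * n))%Z).
exists q.
have h1 := divbound A n hn; have h2 := divbound B n hn; simpl in h1, h2.
set r := gadd x (gneg (gmul q y)).
have e : gmul r (gconj y) = (A - q.1 * n, B - q.2 * n).
  by rewrite /r rconj.
have : gnrm r * n = (A - q.1 * n) * (A - q.1 * n) + (B - q.2 * n) * (B - q.2 * n).
  have := gnrmM r (gconj y); rewrite e gconj_norm -/n => <-; reflexivity.
rewrite /q /=.
move: h1 h2.
set e1 := (A - _ * n); set e2 := (B - _ * n).
move=> h1 h2 h3.
have := gnrm_ge0 r.
nia.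
Qed.

Lemma bezout_n (m : nat) : forall x y, gnrm y <= m%:Z ->
  exists g s t, g = gadd (gmul s x) (gmul t y) /\ gdvd g x /\ gdvd g y.
Proof.
elim: m => [|m IH] x y hy.
- have hy0 : y = g0 by apply: gnrm0; have := gnrm_ge0 y; lia.
  exists x, g1, g0; split; first by rewrite hy0; gd x; gring.
  split; first exact: gdvd_refl.
  by exists g0; rewrite hy0 gmul0.
- case: (classic (y = g0)) => hy0.
    exists x, g1, g0; split; first by rewrite hy0; gd x; gring.
    split; first exact: gdvd_refl.
    by exists g0; rewrite hy0 gmul0.
  have [q hq] := gdiv x y hy0.
  have [g [s [t [eg [d1 d2]]]]] := IH y (gadd x (gneg (gmul q y))) ltac:(lia).
  exists g, t, (gadd s (gneg (gmul t q))); split.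
    rewrite eg; clear -x y s t q; gd x; gd y; gd s; gd t; gd q; gring.
  split=> //.
  have -> : x = gadd (gadd x (gneg (gmul q y))) (gmul q y) by clear -x y q; gd x; gd y; gd q; gring.
  by apply: gdvd_add => //; apply: gdvd_mull.
Qed.

Lemma bezout1 x y : gcd_unit x y -> exists s t, gadd (gmul s x) (gmul t y) = g1.
Proof.
move=> h.
have [g [s [t [eg [d1 d2]]]]] := bezout_n `|gnrm y|%N x y ltac:(have := gnrm_ge0 y; lia).
have [v [_ hv]] := gunit_inv _ (h _ d1 d2).
exists (gmul v s), (gmul v t).
rewrite -hv eg; clear -x y s t v; gd x; gd y; gd s; gd t; gd v; gring.
Qed.

Lemma gmulCA a b c : gmul a (gmul b c) = gmul b (gmul a c).
Proof. by rewrite gmulA (gmulC a) -gmulA. Qed.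

Lemma gnrm_ge2 x : x <> g0 -> ~ gunit x -> 2 <= gnrm x.
Proof.
move=> h1 h2; have := gnrm0' _ h1.
have : gnrm x <> 1 by move=> e; apply: h2; apply/gunit_norm.
lia.
Qed.

Lemma gmul_ne0 a b : gmul a b <> g0 -> a <> g0 /\ b <> g0.
Proof. by move=> h; split=> e; apply: h; rewrite e ?gmul0 // gmulC gmul0. Qed.

Lemma prime_div_n (m : nat) : forall x, gnrm x <= m%:Z -> x <> g0 -> ~ gunit x ->
  exists p, gprime p /\ gdvd p x.
Proof.
elim: m => [|m IH] x hx h0 hu.
  by have := gnrm0' _ h0; lia.
case: (classic (gprime x)) => hp; first by exists x; split=> //; exact: gdvd_refl.
have : ~ (forall a b : gi, x = gmul a b -> gunit a \/ gunit b).
  by move=> H; apply: hp; split=> //; split.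
move=> /not_all_ex_not [a H]. move: H => /not_all_ex_not [b H]. apply imply_to_and in H. destruct H as [hab H]. apply not_or_and in H. destruct H as [ha hb].
have [a0 b0] : a <> g0 /\ b <> g0 by apply: gmul_ne0; rewrite -hab.
have e := gnrmM a b; rewrite -hab in e.
have := gnrm_ge2 _ b0 hb; have := gnrm0' _ a0 => h1 h2.
have [p [pp pd]] := IH a ltac:(nia) a0 ha.
exists p; split=> //; apply: gdvd_trans pd _; rewrite hab; exists b; done.
Qed.

Lemma w1_dvd x : ~ inO x -> gdvd w1 x.
Proof.
gd x; rewrite /inO /= => h.
exists (((a + b) %/ 2)%Z, ((b - a) %/ 2)%Z).
rewrite /gmul /w1 /=; congr (_, _); lia.
Qed.

Lemma dvd_w1 x : gdvd w1 x -> ~ inO x.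
Proof. move=> [k ->]; gd k; rewrite /inO /gmul /w1 /=; lia. Qed.

Lemma normalize x : inO x -> exists e, gunit e /\ inOI (gmul e x).
Proof.
gd x; rewrite /inO /inOI /= => h.
have : (a %% 2 = 1)%Z \/ (a %% 2 = 0)%Z by lia.
case=> ha.
  have : (a %% 4 = 1)%Z \/ (a %% 4 = 3)%Z by lia.
  case=> h4.
    exists (1, 0); split; first by left.
    rewrite /gmul /inO /=; split; lia.
  exists (-1, 0); split; first by right; left.
  rewrite /gmul /inO /=; split; lia.
have : ((- b) %% 4 = 1)%Z \/ ((- b) %% 4 = 3)%Z by lia.
case=> h4.
  exists (0, 1); split; first by right; right; left.
  rewrite /gmul /inO /=; split; lia.
exists (0, -1); split; first by right; right; right.
rewrite /gmul /inO /=; split; lia.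
Qed.

Lemma gunit_not_prime p : gprime p -> ~ gunit p. Proof. by case=> _ []. Qed.

Lemma gprime_assoc e p : gunit e -> gprime p -> gprime (gmul e p).
Proof.
move=> he [p0 [pu pf]]; have [v [vu ev]] := gunit_inv _ he.
have pE : p = gmul v (gmul e p) by rewrite gmulA (gmulC v) ev gmul1.
split; first exact: gmul_unit_ne0.
split.
  by move=> h; apply: pu; rewrite pE; apply: gunitM.
move=> a b hab.
have : p = gmul (gmul v a) b by rewrite pE hab gmulA.
case/pf => h; last by right.
left; have -> : a = gmul e (gmul v a) by rewrite gmulA (gmulC e) (gmulC v) ev gmul1.
exact: gunitM.
Qed.

Lemma gdvd_assoc e p x : gunit e -> gdvd p x -> gdvd (gmul e p) x.
Proof.
move=> he [k ->]; have [v [vu ev]] := gunit_inv _ he.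
exists (gmul v k); rewrite -gmulA (gmulCA p) gmulA ev gmul1; done.
Qed.

Lemma insert_prime s p : uniq (map fst s) -> exists s',
  uniq (map fst s') /\ (forall pa, pa \in s' -> pa \in s \/ pa.1 = p) /\
  gmul p (gprod_pows s) = gprod_pows s'.
Proof.
elim: s => [|[q e] t IH] /=.
  move=> _; exists [:: (p, 1%N)]; split=> //; split.
    by move=> pa; rewrite inE => /eqP ->; right.
  by rewrite /gprod_pows /= !gmul1r.
case/andP=> qt ut.
case: (eqVneq q p) => [qp|qp].
  exists ((q, e.+1) :: t); split; first by rewrite /= qt ut.
  split.
    move=> pa; rewrite inE => /orP [/eqP ->|pt]; [by right|by left; rewrite inE pt orbT].
  by rewrite /gprod_pows /= -qp gmulA.
have [t' [u' [h' e']]] := IH ut.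
exists ((q, e) :: t'); split.
  rewrite /= u' andbT; apply/negP => /mapP [pa pat pq].
  case: (h' _ pat) => [pt|pp].
    by move: qt; rewrite pq => /negP; apply; apply/mapP; exists pa.
  by move/eqP: qp; apply; rewrite pq.
split.
  move=> pa; rewrite inE => /orP [/eqP ->|pt]; first by left; rewrite inE eqxx.
  by case: (h' _ pt) => [hh|hh]; [left; rewrite inE hh orbT|right].
by rewrite /gprod_pows /= -/(gprod_pows t) -/(gprod_pows t') -e' gmulCA.
Qed.

Lemma dec2 (x : int) : exists k, x = 2 * k \/ x = 2 * k + 1.
Proof. exists (x %/ 2)%Z; lia. Qed.

Ltac dec x := let k := fresh "k" in let e := fresh "e" in
  have [k [e|e]] := dec2 x; subst x.

Lemma parity_all (d a1 a2 b1 b2 c1 c2 : int) : d = 1 \/ d = -1 ->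
  gadd (gadd (gsq (a1, a2)) (gmul (1, d) (gsq (b1, b2)))) (gsq (c1, c2)) = g0 ->
  ((b1 + b2) %% 2 = 0)%Z /\ ((a1 + a2) %% 2 = (c1 + c2) %% 2)%Z /\
  (((a1 + a2) %% 2 = 1)%Z -> ((c1 + c2) %% 2 = 1)%Z ->
     (b1 %% 2 = 0)%Z /\ (b2 %% 2 = 0)%Z /\ ((a1 %% 2 = 1)%Z <-> (c1 %% 2 = 0)%Z)).
Proof.
rewrite /gadd /gsq /gmul /g0 /= => hd [E1 E2].
case: hd => ?; subst d; dec a1; dec a2; dec b1; dec b2; dec c1; dec c2; lia.
Qed.

Lemma parity_gi (d : int) (x y z : gi) : d = 1 \/ d = -1 ->
  gadd (gadd (gsq x) (gmul (1, d) (gsq y))) (gsq z) = g0 ->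
  ((y.1 + y.2) %% 2 = 0)%Z /\ ((x.1 + x.2) %% 2 = (z.1 + z.2) %% 2)%Z /\
  (((x.1 + x.2) %% 2 = 1)%Z -> ((z.1 + z.2) %% 2 = 1)%Z ->
     (y.1 %% 2 = 0)%Z /\ (y.2 %% 2 = 0)%Z /\ ((x.1 %% 2 = 1)%Z <-> (z.1 %% 2 = 0)%Z)).
Proof. gd x; gd y; gd z; exact: parity_all. Qed.

Lemma norm_odd x : inO x -> (x.1 %% 2 = 1)%Z -> exists e, gunit e /\ gsq e = g1 /\ inOI (gmul e x).
Proof.
gd x; rewrite /inO /inOI /= => h ha.
have : (a %% 4 = 1)%Z \/ (a %% 4 = 3)%Z by lia.
case=> h4.
  exists (1, 0); split; first by left.
  rewrite /gsq /gmul /inO /g1 /=; split; [congr (_, _); lia|split; lia].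
exists (-1, 0); split; first by right; left.
rewrite /gsq /gmul /inO /g1 /=; split; [congr (_, _); lia|split; lia].
Qed.

Lemma norm_even x : inO x -> (x.1 %% 2 = 0)%Z -> exists e, gunit e /\ gsq e = (-1, 0) /\ inOI (gmul e x).
Proof.
gd x; rewrite /inO /inOI /= => h ha.
have : ((- b) %% 4 = 1)%Z \/ ((- b) %% 4 = 3)%Z by lia.
case=> h4.
  exists (0, 1); split; first by right; right; left.
  rewrite /gsq /gmul /inO /=; split; [congr (_, _); lia|split; lia].
exists (0, -1); split; first by right; right; right.
rewrite /gsq /gmul /inO /=; split; [congr (_, _); lia|split; lia].
Qed.

Lemma factor_n (m : nat) : forall x, gnrm x <= m%:Z -> x <> g0 ->
  exists v k s, gunit v /\ uniq (map fst s) /\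
    (forall pa, pa \in s -> gprime pa.1 /\ inOI pa.1) /\
    x = gmul v (gmul (gexp w1 k) (gprod_pows s)).
Proof.
elim: m => [|m IH] x hx h0.
  by have := gnrm0' _ h0; lia.
case: (classic (gunit x)) => hu.
  exists x, 0%N, [::]; split=> //; split=> //; split=> //.
  by rewrite /= gmul1 gmul1r.
case: (classic (inO x)) => ho.
  have [p [pp pd]] := prime_div_n m.+1 x hx h0 hu.
  have po : inO p.
    apply: NNPP => hp; apply: (dvd_w1 x) => //.
    exact: gdvd_trans (w1_dvd _ hp) pd.
  have [e [eu eo]] := normalize _ po.
  have pp' := gprime_assoc _ _ eu pp.
  have [x' ex'] := gdvd_assoc _ _ _ eu pd.
  have [_ x0] : gmul e p <> g0 /\ x' <> g0 by apply: gmul_ne0; rewrite -ex'.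
  have hn := gnrmM (gmul e p) x'; rewrite -ex' in hn.
  have := gnrm_ge2 _ (proj1 pp') (proj1 (proj2 pp')); have := gnrm0' _ x0 => h1 h2.
  have [v [k [s [vu [us [sp es]]]]]] := IH x' ltac:(nia) x0.
  have [s' [us' [hs' es']]] := insert_prime s (gmul e p) us.
  exists v, k, s'; split=> //; split=> //; split.
    move=> pa /hs' [/sp //|->]; by split.
  by rewrite ex' es gmulCA; congr (gmul v _); rewrite gmulCA es'.
have [x' ex'] := w1_dvd _ ho.
have [_ x0] : w1 <> g0 /\ x' <> g0 by apply: gmul_ne0; rewrite -ex'.
have hn := gnrmM w1 x'; rewrite -ex' in hn.
have := gnrm0' _ x0 => h1.
have hw : gnrm w1 = 2 by rewrite /gnrm /w1 /=.
rewrite hw in hn.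
have [v [k [s [vu [us [sp es]]]]]] := IH x' ltac:(nia) x0.
exists v, k.+1, s; split=> //; split=> //; split=> //.
by rewrite ex' es gmulCA; congr (gmul v _); rewrite gmulA.
Qed.

Lemma scale_eq v a b g c : gadd (gadd (gsq (gmul v a)) (gmul c (gsq (gmul v b)))) (gsq (gmul v g)) =
  gmul (gsq v) (gadd (gadd (gsq a) (gmul c (gsq b))) (gsq g)).
Proof. gd v; gd a; gd b; gd g; gd c; gring. Qed.

Lemma sq_unit_mul e x : gsq (gmul e x) = gmul (gsq e) (gsq x).
Proof. gd e; gd x; gring. Qed.

Lemma fin_eq x y z c e e' : gsq e = g1 -> gsq e' = (-1, 0) ->
  gadd (gadd (gsq x) (gmul c (gsq y))) (gsq z) = g0 ->
  gadd (gsq (gmul e x)) (gmul c (gsq y)) = gsq (gmul e' z).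
Proof.
rewrite !sq_unit_mul => -> ->; rewrite gmul1.
gd x; gd y; gd z; gd c; rewrite /gadd /gsq /gmul /g0 /= => [[h1 h2]]; congr (_, _); lia.
Qed.

Lemma eq_swap x y z c : gadd (gadd (gsq x) (gmul c (gsq y))) (gsq z) = g0 ->
  gadd (gadd (gsq z) (gmul c (gsq y))) (gsq x) = g0.
Proof. gd x; gd y; gd z; gd c; rewrite /gadd /gsq /gmul /g0 /= => [[h1 h2]]; congr (_, _); lia. Qed.

Lemma bez_ident s t a b g c : gsq (gadd (gmul s a) (gmul t b)) =
  gadd (gadd (gmul b (gadd (gadd (gmul (gneg (gsq s)) (gmul c b)) (gmul (gadd g1 g1) (gmul s (gmul t a)))) (gmul (gsq t) b)))
        (gmul (gneg (gsq s)) (gsq g)))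
   (gmul (gsq s) (gadd (gadd (gsq a) (gmul c (gsq b))) (gsq g))).
Proof. gd s; gd t; gd a; gd b; gd g; gd c; gring. Qed.

Lemma gcd_swap a b g c : gadd (gadd (gsq a) (gmul c (gsq b))) (gsq g) = g0 ->
  gcd_unit a b -> gcd_unit g b.
Proof.
move=> E h d dg db.
have [s [t e]] := bezout1 a b h.
have : gsq (gadd (gmul s a) (gmul t b)) = g1 by rewrite e /gsq gmul1.
rewrite (bez_ident _ _ _ _ g c) E gmul0 => e1.
apply: gdvd1; rewrite -e1.
have -> : forall z, gadd z g0 = z by move=> z; gd z; gring.
apply: gdvd_add; first exact: gdvd_mulr.
by apply: gdvd_mull; rewrite /gsq; apply: gdvd_mulr.
Qed.

Lemma inO_unit u x : gunit u -> inO x -> inO (gmul u x).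
Proof.
move=> hu hx; apply: NNPP => h; apply: (dvd_w1 x) => //.
exact: (gdvd_unitl _ _ _ hu (w1_dvd _ h)).
Qed.

Lemma shuffle v v0 W X : gmul v0 v = g1 -> gmul v (gmul W (gmul v0 X)) = gmul W X.
Proof. move=> hv; rewrite (gmulCA W v0) gmulA (gmulC v v0) hv gmul1 //. Qed.

Lemma w2_split k P : gmul (gexp w1 2) (gmul (gexp w1 k) P) = gmul (gexp (1, 1) (2 + k)) P.
Proof. rewrite /= gmul1r -!gmulA //. Qed.

Lemma conv_eq X c Z : gadd (gsq X) c = gsq Z -> gadd (gadd (gsq X) c) (gsq (gmul gI Z)) = g0.
Proof. gd X; gd c; gd Z; rewrite /gadd /gsq /gmul /g0 /gI /= => [[h1 h2]]; congr (_, _); lia. Qed.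

Lemma beta_split (beta : gi) : (beta.1 %% 2 = 0)%Z -> (beta.2 %% 2 = 0)%Z ->
  beta = gmul (gexp w1 2) ((beta.2 %/ 2)%Z, - (beta.1 %/ 2)%Z).
Proof. gd beta; rewrite /gexp /gmul /w1 /g1 /= => h1 h2; congr (_, _); lia. Qed.

Theorem theorem4p14 (delta : int) (hdelta : delta = 1 \/ delta = -1) :
  (* direct part *)
  (forall alpha beta gamma : gi,
     gadd (gadd (gsq alpha) (gmul (1, delta) (gsq beta))) (gsq gamma) = g0 ->
     alpha <> g0 -> beta <> g0 -> gamma <> g0 ->
     gcd_unit alpha beta ->
     exists (u1 u2 u3 : gi) (swap : bool),
       gunit u1 /\ gunit u2 /\ gunit u3 /\
       let X := if swap then gmul u3 gamma else gmul u1 alpha in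
       let Y := gmul u2 beta in
       let Z := if swap then gmul u1 alpha else gmul u3 gamma in
       gadd (gsq X) (gmul (1, delta) (gsq Y)) = gsq Z /\
       inOI X /\ inOI Z /\
       (exists (a1 : nat) (s : seq (gi * nat)),
          uniq (map fst s) /\
          (forall pa, pa \in s -> gprime pa.1 /\ inOI pa.1) /\
          Y = gmul (gexp (1, 1) (2 + a1)) (gprod_pows s)) /\
       gcd_unit X Y /\
       X <> g0 /\ Y <> g0 /\ Z <> g0)
  /\
  (* converse *)
  (forall X Y Z : gi,
     gadd (gsq X) (gmul (1, delta) (gsq Y)) = gsq Z ->
     gcd_unit X Y -> X <> g0 -> Y <> g0 -> Z <> g0 ->
     gadd (gadd (gsq X) (gmul (1, delta) (gsq Y))) (gsq (gmul gI Z)) = g0 /\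
     gcd_unit X Y /\ X <> g0 /\ Y <> g0 /\ gmul gI Z <> g0).
Proof.
split.
- move=> alpha beta gamma E a0 b0 c0 hab.
  have [P1 [P2 P3]] := parity_gi delta alpha beta gamma hdelta E.
  have ao : inO alpha.
    apply: NNPP => h.
    have hw : gunit w1.
      by apply: hab; [exact: w1_dvd | apply: w1_dvd; rewrite /inO; lia].
    by move: hw; rewrite gunit_norm /gnrm /w1 /=; lia.
  have co : inO gamma by move: ao P2; rewrite /inO; lia.
  have [be1 [be2 _]] := P3 ao co.
  have eb := beta_split beta be1 be2.
  set b' := (_, _) in eb.
  have [_ b'0] : gexp w1 2 <> g0 /\ b' <> g0 by apply: gmul_ne0; rewrite -eb.
  have [v0 [k [s [v0u [us [sp es]]]]]] :=
    factor_n `|gnrm b'|%N b' ltac:(have := gnrm_ge0 b'; lia) b'0.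
  have [v [vu hv]] := gunit_inv _ v0u.
  have Es : gadd (gadd (gsq (gmul v alpha)) (gmul (1, delta) (gsq (gmul v beta)))) (gsq (gmul v gamma)) = g0
    by rewrite scale_eq E gmul0.
  have xo := inO_unit v alpha vu ao.
  have zo := inO_unit v gamma vu co.
  have [_ [_ Q3]] := parity_gi delta _ _ _ hdelta Es.
  have [_ [_ Q]] := Q3 xo zo.
  have hY : gmul v beta = gmul (gexp (1, 1) (2 + k)) (gprod_pows s).
    by rewrite {1}eb es shuffle // w2_split.
  have gcb := gcd_swap alpha beta gamma _ E hab.
  case: (classic (((gmul v alpha).1 %% 2 = 1)%Z)) => hx1.
  + have [e [eu [e2 eo]]] := norm_odd _ xo hx1.
    have hz : ((gmul v gamma).1 %% 2 = 0)%Z by apply/Q.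
    have [e' [e'u [e'2 e'o]]] := norm_even _ zo hz.
    exists (gmul e v), v, (gmul e' v), false.
    split; first exact: gunitM.
    split=> //.
    split; first exact: gunitM.
    rewrite /= -!gmulA.
    split; first exact: fin_eq _ _ _ _ _ _ e2 e'2 Es.
    split=> //; split=> //.
    split; first by exists k, s.
    split; first by rewrite !gmulA; apply: gcd_unit_units => //; exact: gunitM.
    split; first by apply: gmul_unit_ne0 => //; apply: gmul_unit_ne0.
    split; first by apply: gmul_unit_ne0.
    by apply: gmul_unit_ne0 => //; apply: gmul_unit_ne0.
  + have hx0 : ((gmul v alpha).1 %% 2 = 0)%Z by lia.
    have hz : ((gmul v gamma).1 %% 2 = 1)%Z.
      have : ~ ((gmul v gamma).1 %% 2 = 0)%Z by move/Q.
      lia.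
    have [e [eu [e2 eo]]] := norm_odd _ zo hz.
    have [e' [e'u [e'2 e'o]]] := norm_even _ xo hx0.
    exists (gmul e' v), v, (gmul e v), true.
    split; first exact: gunitM.
    split=> //.
    split; first exact: gunitM.
    rewrite /= -!gmulA.
    split; first exact: fin_eq _ _ _ _ _ _ e2 e'2 (eq_swap _ _ _ _ Es).
    split=> //; split=> //.
    split; first by exists k, s.
    split; first by rewrite !gmulA; apply: gcd_unit_units => //; exact: gunitM.
    split; first by apply: gmul_unit_ne0 => //; apply: gmul_unit_ne0.
    split; first by apply: gmul_unit_ne0.
    by apply: gmul_unit_ne0 => //; apply: gmul_unit_ne0.
- move=> X Y Z E hg x0 y0 z0.
  split; first exact: conv_eq.
  do 3 (split=> //).
  by apply: gmul_unit_ne0 => //; right; right; left.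
Qed.
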